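(* Consider the most-profitable-augmenting-path algorithm (described in the context) run on an instance of the maximum-weight online bipartite left-perfect matching problem with budget $k=4$. Then for each $v\in R$, the loss $\ell^t_v$ is non-decreasing in $t$ for $t=1,\dots,n+1$.
   Context: Problem: $G=(L\cup R,E)$ is a complete bipartite graph with $n:=|L|\le|R|$ and edge weights $w:E\to\mathbb{Q}_{\ge0}$. The algorithm initially knows $R$; at timestep $t=1,\dots,n$ the vertex $u_t\in L$ arrives with all incident edges and their weights. At the end of each timestep the algorithm outputs a left-perfect matching of the revealed graph (every arrived vertex of $L$ matched), obtainable from the previous one (empty initially) by at most $4$ (re)assignments (the number of vertices of nonzero degree in the symmetric difference of the two matchings); matched vertices stay matched. Algorithm: when $u_t$ arrives, among all augmenting paths with respect to the current matching $M$ that contain $u_t$ and have length at most $3$, choose one $P$ maximizing the weight of $M\triangle P$ minus the weight of $M$, and output $M\triangle P$. Notation: $M_t$ is the matching at the beginning of timestep $t$ (output at time $t-1$; $M_1=\emptyset$, $M_{n+1}$ is the final matching); $R^t_{\mathsf{exp}}$ is the set of vertices of $R$ not covered by $M_t$; $M_t(v)$ is the partner of $v$ in $M_t$. For $v\in R$, the loss $\ell^t_v:=w(M_t(v),v)-\max_{v'\in R^t_{\mathsf{exp}}}w(M_t(v),v')$ if $v$ is matched in $M_t$, and $\ell^t_v:=0$ otherwise, with the convention $\max\emptyset:=0$. *)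

(* Defs.v *)
From HB Require Import structures.
From mathcomp Require Import all_boot all_order all_algebra.
Set Implicit Arguments. Unset Strict Implicit. Unset Printing Implicit Defensive.
Import Order.TTheory GRing.Theory Num.Theory.
Local Open Scope ring_scope.

(* Left side L = 'I_n, vertex u_t (arriving at timestep t, 1-based) is the
   ordinal with value t-1.  Right side R is a finType. *)

Section Matching.
Variables (n : nat) (R : finType).
Notation V := ('I_n + R)%type.
Notation E := ('I_n * R)%type.

Definition covers (M : {set E}) (x : V) : bool :=
  match x with
  | inl u => [exists e in M, e.1 == u]
  | inr v => [exists e in M, e.2 == v]
  end.

Definition edge_of (x y : V) : option E :=
  match x, y with
  | inl u, inr v => Some (u, v)
  | inr v, inl u => Some (u, v)
  | _, _ => None
  end.

Definition revealed (t : nat) (x : V) : bool :=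
  match x with
  | inl u => (val u < t)%N
  | inr _ => true
  end.

Definition path_edges (x0 : V) (s : seq V) : seq E :=
  pmap id (pairmap edge_of x0 s).

Definition path_edge_set (x0 : V) (s : seq V) : {set E} :=
  [set e in path_edges x0 s].

(* x0 :: s is an augmenting path w.r.t. M in the graph revealed at time t:
   a simple path (distinct vertices, consecutive vertices adjacent) with at
   least one edge, both endpoints uncovered by M, whose edges alternate
   between non-matching and matching edges (starting with non-matching). *)
Definition augmenting_path (t : nat) (M : {set E}) (x0 : V) (s : seq V) : Prop :=
  [/\ uniq (x0 :: s) && (s != [::]),
      size (path_edges x0 s) = size s,
      all (revealed t) (x0 :: s),
      ~~ covers M x0 && ~~ covers M (last x0 s)
    & all (fun p => (p.1 \in M) == odd p.2)
          (zip (path_edges x0 s) (iota 0 (size s)))].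

Definition contains_arrival (t : nat) (x0 : V) (s : seq V) : bool :=
  [exists u : 'I_n, (val u == t.-1)%N && (inl u \in x0 :: s)].

Definition symdiff (A B : {set E}) : {set E} := (A :\: B) :|: (B :\: A).

Definition weight (w : 'I_n -> R -> rat) (M : {set E}) : rat :=
  \sum_(e in M) w e.1 e.2.

Definition admissible (t : nat) (M : {set E}) (x0 : V) (s : seq V) : Prop :=
  [/\ augmenting_path t M x0 s, (size s <= 3)%N & contains_arrival t x0 s].

Definition alg_step (w : 'I_n -> R -> rat) (t : nat) (M M' : {set E}) : Prop :=
  exists x0 s,
    [/\ admissible t M x0 s,
        M' = symdiff M (path_edge_set x0 s)
      & forall y0 s', admissible t M y0 s' ->
          weight w (symdiff M (path_edge_set y0 s')) - weight w M
          <= weight w M' - weight w M].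

(* loss of v in R w.r.t. matching M; max over the empty set is 0
   (weights are nonnegative, so max with neutral 0 is the true max) *)
Definition loss (w : 'I_n -> R -> rat) (M : {set E}) (v : R) : rat :=
  match [pick e in M | e.2 == v] with
  | Some e => w e.1 v - \big[Num.max/0]_(v' : R | ~~ covers M (inr v')) w e.1 v'
  | None => 0
  end.

End Matching.

(* Main.v *)
Require Import Defs.
From mathcomp Require Import all_boot all_order all_algebra.
From mathcomp Require Import zify ring lra.
Set Implicit Arguments. Unset Strict Implicit. Unset Printing Implicit Defensive.
Import Order.TTheory GRing.Theory Num.Theory.
Local Open Scope ring_scope.

Section Proof.
Variables (n : nat) (R : finType) (w : 'I_n -> R -> rat).
Hypothesis w_ge0 : forall u v, 0 <= w u v.
Notation E := ('I_n * R)%type.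

Definition matching (M : {set E}) := forall e e', e \in M -> e' \in M ->
  (e.1 = e'.1 \/ e.2 = e'.2) -> e = e'.
Definition Inv (t : nat) (M : {set E}) :=
  matching M /\ (forall e, e \in M -> (val e.1 < t.-1)%N).

Definition mf (M : {set E}) (u : 'I_n) :=
  \big[Num.max/0]_(v' : R | ~~ covers M (inr v')) w u v'.

Lemma coversRP (M : {set E}) v : reflect (exists u, (u,v) \in M) (covers M (inr v)).
Proof.
apply: (iffP existsP) => [[[u v'] /andP[H /eqP /= E]]|[u H]].
  by exists u; rewrite -E.
by exists (u,v); rewrite H eqxx.
Qed.

Lemma coversLP (M : {set E}) u : reflect (exists v, (u,v) \in M) (covers M (inl u)).
Proof.
apply: (iffP existsP) => [[[u' v] /andP[H /eqP /= E]]|[v H]].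
  by exists v; rewrite -E.
by exists (u,v); rewrite H eqxx.
Qed.

Lemma mf_ge0 M u : 0 <= mf M u.
Proof. rewrite /mf; apply: (big_ind (fun b => 0 <= b)) => // x y hx hy; by rewrite le_max hx. Qed.

Lemma mf_ge M u v : ~~ covers M (inr v) -> w u v <= mf M u.
Proof. move=> h; rewrite /mf (bigD1 v) //= le_max lexx. by []. Qed.

Lemma mf_le M u X : 0 <= X -> (forall v, ~~ covers M (inr v) -> w u v <= X) -> mf M u <= X.
Proof.
move=> h0 h; rewrite /mf; apply: (big_ind (fun b => b <= X)) => // x y hx hy.
by rewrite ge_max hx hy.
Qed.

Lemma mf_mono M M' u : (forall v, ~~ covers M' (inr v) -> ~~ covers M (inr v)) ->
  mf M' u <= mf M u.
Proof. move=> h; apply: mf_le; first exact: mf_ge0. by move=> v /h /mf_ge. Qed.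

Lemma loss_match M u v : matching M -> (u,v) \in M -> loss w M v = w u v - mf M u.
Proof.
move=> hm huv; rewrite /loss; case: pickP => [e /andP[he /eqP he2]|/(_ (u,v))]; last by rewrite huv eqxx.
have -> : e = (u,v) by apply: hm => //; right.
by [].
Qed.

Lemma loss_free M v : ~~ covers M (inr v) -> loss w M v = 0.
Proof.
move=> h; rewrite /loss; case: pickP => [e /andP[he /eqP he2]|//].
case/negP: h; apply/coversRP; move: he he2; case: e => a b /= he <-; by exists a.
Qed.

Lemma loss_same M M' u v : matching M -> matching M' -> (u,v) \in M -> (u,v) \in M' ->
  (forall x, ~~ covers M' (inr x) -> ~~ covers M (inr x)) ->
  loss w M v <= loss w M' v.
Proof.
move=> hm hm' h h' hc; rewrite (loss_match hm h) (loss_match hm' h').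
have := mf_mono u hc; lra.
Qed.

Lemma weight_symdiff M P : weight w (symdiff M P) = weight w M + weight w (P :\: M) - weight w (M :&: P).
Proof.
rewrite /weight (big_setID M) /= [in X in _ = X + _ - _](big_setID P) /=.
have -> : symdiff M P :&: M = M :\: P by apply/setP => e; rewrite /symdiff !inE; case: (e \in M); case: (e \in P).
have -> : symdiff M P :\: M = P :\: M by apply/setP => e; rewrite /symdiff !inE; case: (e \in M); case: (e \in P).
lra.
Qed.

Lemma eq_inl (x y : 'I_n) : (inl x == inl y :> 'I_n + R) = (x == y).
Proof. by apply/eqP/eqP => [[]|->]. Qed.
Lemma eq_inlr (x : 'I_n) (y : R) : (inl x == inr y :> 'I_n + R) = false.
Proof. by []. Qed.
Lemma eq_inrl (x : 'I_n) (y : R) : (inr y == inl x :> 'I_n + R) = false.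
Proof. by []. Qed.

Lemma adm_cases t (M : {set E}) x0 s (ut : 'I_n) : val ut = t.-1 -> Inv t M -> admissible t M x0 s ->
  (exists v, ~~ covers M (inr v) /\ path_edge_set x0 s = [set (ut, v)]) \/
  (exists u v v', [/\ (u,v) \in M, ~~ covers M (inr v') &
     path_edge_set x0 s = [set (ut,v); (u,v); (u,v')]]).
Proof.
move=> hut [hm hlt] [[/andP[hu hs0] hsz hrev /andP[c0 c1] halt] hs3 /existsP[u /andP[/eqP hu' hin]]].
have eu : u = ut by apply: val_inj; rewrite hu' hut.
subst u.
have utfree : ~~ covers M (inl ut).
  apply/coversLP => -[v hv]; have := hlt _ hv; by rewrite /= hut ltnn.
rewrite /path_edge_set.
case: s hu hs0 hsz hrev c1 halt hs3 hin => [|a [|b [|c [|d s]]]] //= hu _ hsz hrev c1 halt _ hin.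
- case: x0 a hu hsz hrev c0 c1 halt hin => [p|q] [p'|q'] //= hu hsz hrev c0 c1 halt hin;
  rewrite !inE /= ?eq_inl ?eq_inlr ?eq_inrl ?orbF /= in hin; move/eqP: hin => hin; subst.
  + left; exists q'; split => //; apply/setP => e; by rewrite !inE.
  + left; exists q; split => //; apply/setP => e; by rewrite !inE.
- case: x0 a b hu hsz hrev c0 c1 halt hin => [p|q] [p'|q'] [p''|q''] //= hu hsz hrev c0 c1 halt hin.
  + move: halt => /andP[_ /andP[/eqP h _]]; case/negP: c1; apply/existsP; exists (p'', q'); by rewrite h eqxx.
  + move: halt => /andP[_ /andP[/eqP h _]]; case/negP: c1; apply/existsP; exists (p', q''); by rewrite h eqxx.
- case: x0 a b c hu hsz hrev c0 c1 halt hin => [p|q] [p'|q'] [p''|q''] [p3|q3] //= hu hsz hrev c0 c1 halt hin;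
  rewrite !inE /= ?eq_inl ?eq_inlr ?eq_inrl ?orbF /= in hin;
  move: halt => /andP[_ /andP[/eqP h _]].
  + case/orP: hin => /eqP hin; subst; last first.
      by case/negP: utfree; apply/coversLP; exists q'.
    right; exists p'', q', q3; split => //; apply/setP => e; by rewrite !inE orbA.
  + case/orP: hin => /eqP hin; subst.
      by case/negP: utfree; apply/coversLP; exists q''.
    right; exists p', q'', q; split => //; apply/setP => e; rewrite /= !inE.
    by case: (e == (p', q)); case: (e == (p', q'')); case: (e == (p3, q'')).
Qed.

Lemma matching_add (A : {set E}) a : matching A ->
  (forall e, e \in A -> e.1 <> a.1 /\ e.2 <> a.2) -> matching (a |: A).
Proof.
move=> hA hn e e'; rewrite !in_setU1 => /predU1P[->|he] /predU1P[->|he'] heq //.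
- by have [h1 h2] := hn e' he'; case: heq => h; [case: h1|case: h2].
- by have [h1 h2] := hn e he; case: heq => h; [case: h1|case: h2].
- exact: hA.
Qed.

Lemma matching_sub (A B : {set E}) : matching A -> B \subset A -> matching B.
Proof. move=> hA /subsetP hs e e' he he'; apply: hA; [exact: hs|exact: hs]. Qed.

Lemma adm1 t (M : {set E}) ut v : val ut = t.-1 -> (1 <= t)%N -> Inv t M ->
  ~~ covers M (inr v) -> admissible t M (inl ut) [:: inr v].
Proof.
move=> hut ht [hm hlt] hv.
have utfree : ~~ covers M (inl ut).
  apply/coversLP => -[v' hv']; have := hlt _ hv'; by rewrite /= hut ltnn.
split => //; first split => //=.
- by rewrite hut andbT; case: t ht {hut hlt}.
- by rewrite utfree.
- have : (ut, v) \notin M by apply: contra utfree => h; apply/coversLP; exists v.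
  by case: ((ut, v) \in M).
- by apply/existsP; exists ut; rewrite hut eqxx !inE eqxx.
Qed.

Lemma adm3 t (M : {set E}) ut u v v' : val ut = t.-1 -> (1 <= t)%N -> Inv t M ->
  (u, v) \in M -> ~~ covers M (inr v') ->
  admissible t M (inl ut) [:: inr v; inl u; inr v'].
Proof.
move=> hut ht [hm hlt] huv hv.
have utfree : ~~ covers M (inl ut).
  apply/coversLP => -[v'' hv']; have := hlt _ hv'; by rewrite /= hut ltnn.
have hu := hlt _ huv; rewrite /= in hu.
have neu : ut != u by apply/eqP => e; subst; rewrite hut ltnn in hu.
have nev : v != v' by apply/eqP => e; subst; case/negP: hv; apply/coversRP; exists u.
split => //; first split => //=.
- rewrite !inE !eq_inlr !eq_inrl !eq_inl /= orbF (negbTE neu).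
  have -> : (inr v == inr v' :> 'I_n + R) = (v == v') by apply/eqP/eqP => [[]|->].
  by rewrite (negbTE nev).
- rewrite hut andbT; case: t ht {hut hlt} hu => // t _ /= hu.
  by rewrite ltnS leqnn ltnW.
- by rewrite hv utfree.
- have : (ut, v) \notin M by apply: contra utfree => h; apply/coversLP; exists v.
  have : (u, v') \notin M by apply: contra hv => h; apply/coversRP; exists u.
  by rewrite huv; case: ((ut, v) \in M); case: ((u, v') \in M).
- by apply/existsP; exists ut; rewrite hut eqxx !inE eqxx.
Qed.

Lemma pes1 (ut : 'I_n) (v : R) : path_edge_set (inl ut) [:: inr v] = [set (ut, v)].
Proof. by apply/setP => e; rewrite /path_edge_set !inE. Qed.

Lemma pes3 (ut u : 'I_n) (v v' : R) :
  path_edge_set (inl ut) [:: inr v; inl u; inr v'] = [set (ut, v); (u, v); (u, v')].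
Proof. by apply/setP => e; rewrite /path_edge_set !inE orbA. Qed.

Lemma weight1 (e : E) : weight w [set e] = w e.1 e.2.
Proof. by rewrite /weight big_set1. Qed.

Lemma gainA (M : {set E}) ut v : (ut, v) \notin M ->
  weight w (symdiff M [set (ut, v)]) - weight w M = w ut v.
Proof.
move=> h; rewrite weight_symdiff.
have -> : [set (ut, v)] :\: M = [set (ut, v)].
  by apply/setP => e; rewrite !inE; case: (e =P (ut, v)) => [->|_]; rewrite ?eqxx ?andbT ?andbF.
have -> : M :&: [set (ut, v)] = set0.
  by apply/setP => e; rewrite !inE; case: (e =P (ut, v)) => [->|_]; rewrite ?eqxx ?andbT ?andbF ?(negbTE h).
rewrite weight1 /weight big_set0 /=; lra.
Qed.

Lemma gainB (M : {set E}) ut u v v' : (u, v) \in M -> (ut, v) \notin M -> (u, v') \notin M ->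
  v != v' ->
  weight w (symdiff M [set (ut, v); (u, v); (u, v')]) - weight w M = w ut v + w u v' - w u v.
Proof.
move=> h1 h2 h3 nv; rewrite weight_symdiff.
have -> : [set (ut, v); (u, v); (u, v')] :\: M = (ut, v) |: [set (u, v')].
  apply/setP => e; rewrite !inE; have [he|he] := boolP (e \in M) => /=.
    by apply/esym/norP; split; apply/eqP => E; subst; [rewrite he in h2 | rewrite he in h3].
  have -> : (e == (u,v)) = false by apply/eqP => E; subst; rewrite h1 in he.
  by rewrite orbF.
have -> : M :&: [set (ut, v); (u, v); (u, v')] = [set (u, v)].
  apply/setP => e; rewrite !inE; have [he|he] := boolP (e \in M) => /=.
    have -> : (e == (ut,v)) = false by apply/eqP => E; subst; rewrite he in h2.
    have -> : (e == (u,v')) = false by apply/eqP => E; subst; rewrite he in h3.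
    by rewrite orbF.
  by apply/esym/eqP => E; subst; rewrite h1 in he.
rewrite /weight big_setU1 /=; last first.
  by rewrite inE; apply/eqP => -[_ e]; case/eqP: nv.
rewrite !big_set1 /=; lra.
Qed.

Lemma step t (M M' : {set E}) (ut : 'I_n) : val ut = t.-1 -> (1 <= t)%N -> Inv t M ->
  alg_step w t M M' -> Inv t.+1 M' /\ forall x, loss w M x <= loss w M' x.
Proof.
move=> hut ht hI [x0 [s [hadm eM' hopt]]].
have [hm hlt] := hI.
have utM : forall y, (ut, y) \notin M.
  by move=> y; apply/negP => h; have := hlt _ h; rewrite /= hut ltnn.
have hlt' : (t.-1 < t)%N by lia.
case: (adm_cases hut hI hadm) => [[v [hv hP]] | [u [v [v' [huv hv' hP]]]]]; rewrite hP in eM'.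
- have eA : M' = (ut, v) |: M.
    rewrite eM'; apply/setP => e; rewrite /symdiff !inE.
    have [->|ne] := eqVneq e (ut,v); first by rewrite (negbTE (utM v)).
    by rewrite /=; case: (e \in M).
  have M'v : (ut,v) \in M' by rewrite eA setU11.
  have cov : forall x, ~~ covers M' (inr x) -> ~~ covers M (inr x).
    move=> x; apply: contra => /coversRP[y hy]; apply/coversRP; exists y; by rewrite eA setU1r.
  have hm' : matching M'.
    rewrite eA; apply: matching_add => // e he; split => /= E.
      by have := hlt _ he; rewrite E hut ltnn.
    case/negP: hv; apply/coversRP; move: he E; case: e => a b /= he <-; by exists a.
  split.
    split => // e; rewrite eA => /setU1P[->|he] /=; first by rewrite hut.
    exact: ltn_trans (hlt _ he) hlt'.
  move=> x.
  have opt1 : forall v'', ~~ covers M (inr v'') -> w ut v'' <= w ut v.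
    move=> v'' h; have := hopt _ _ (adm1 hut ht hI h); by rewrite pes1 eM' !gainA.
  have [->|nx] := eqVneq x v.
    rewrite (loss_free hv) (loss_match hm' M'v).
    have : mf M' ut <= w ut v by apply: mf_le => // v'' /cov /opt1.
    lra.
  case: (coversRP M x) => [[y hy]|hx].
    by apply: (loss_same hm hm' hy); [rewrite eA setU1r | exact: cov].
  have hx' : ~~ covers M' (inr x).
    apply/coversRP => -[y]; rewrite eA => /setU1P[[_ E]|hy].
      by rewrite E eqxx in nx.
    by apply: hx; exists y.
  rewrite (loss_free hx') (loss_free (introN (coversRP M x) hx)); exact: lexx.
- have nuu : u != ut by apply/eqP => E; have := hlt _ huv; rewrite /= E hut ltnn.
  have nvv : v != v' by apply/eqP => E; subst; case/negP: hv'; apply/coversRP; exists u.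
  have uv'M : (u,v') \notin M by apply: contra hv' => h; apply/coversRP; exists u.
  have eB : M' = (u,v') |: ((ut,v) |: (M :\ (u,v))).
    rewrite eM'; apply/setP => e; rewrite /symdiff !inE.
    have [he|he] := boolP (e \in M).
      have -> : (e == (ut,v)) = false by apply/eqP => E; subst; move: (utM v); rewrite he.
      have -> : (e == (u,v')) = false by apply/eqP => E; subst; rewrite he in uv'M.
      by case: (e == (u,v)).
    have -> : (e == (u,v)) = false by apply/eqP => E; subst; rewrite huv in he.
    by case: (e == (ut,v)); case: (e == (u,v')).
  have M'v : (ut,v) \in M' by rewrite eB !inE eqxx orbT.
  have M'v' : (u,v') \in M' by rewrite eB !inE eqxx.
  have M'old : forall y x, (y,x) \in M -> x != v -> (y,x) \in M'.
    move=> y x h nx; rewrite eB !inE h andbT.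
    suff -> : ((y, x) == (u, v)) = false by rewrite !orbT.
    by apply/eqP => -[_ E]; rewrite E eqxx in nx.
  have cov : forall x, ~~ covers M' (inr x) -> ~~ covers M (inr x).
    move=> x; apply: contra => /coversRP[y hy]; apply/coversRP.
    have [E|nx] := eqVneq x v; first by exists ut; rewrite E.
    by exists y; apply: M'old.
  have hm' : matching M'.
    rewrite eB; apply: matching_add.
      apply: matching_add; first exact: (matching_sub hm (subD1set M (u,v))).
      move=> e; rewrite in_setD1 => /andP[ne he]; split => /= E.
        by have := hlt _ he; rewrite E hut ltnn.
      by case/eqP: ne; apply: hm => //; right.
    move=> e; rewrite !inE => /predU1P[->|/andP[ne he]] /=.
      split => E; [by rewrite E eqxx in nuu | by rewrite E eqxx in nvv].
    split => E.
      by case/eqP: ne; apply: hm => //; left.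
    case/negP: hv'; apply/coversRP; exists e.1; rewrite -E; by case: e {ne E} he.
  have hut_lt : forall e, e \in M' -> (val e.1 < t.+1.-1)%N.
    move=> e; rewrite eB !inE => /orP[/eqP-> /=|/orP[/eqP-> /=|/andP[_ he]]].
    - exact: ltn_trans (hlt _ huv) hlt'.
    - by rewrite hut.
    - exact: ltn_trans (hlt _ he) hlt'.
  split; first by split.
  have opt1 : forall v'', ~~ covers M (inr v'') -> w ut v'' <= w ut v + w u v' - w u v.
    move=> v'' h; have := hopt _ _ (adm1 hut ht hI h).
    by rewrite pes1 eM' gainA // gainB.
  have opt3 : forall v'', ~~ covers M (inr v'') -> w ut v + w u v'' - w u v <= w ut v + w u v' - w u v.
    move=> v'' h; have := hopt _ _ (adm3 hut ht hI huv h).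
    have nv'' : v != v'' by apply/eqP => E; subst; case/negP: h; apply/coversRP; exists u.
    have uv''M : (u,v'') \notin M by apply: contra h => h'; apply/coversRP; exists u.
    by rewrite pes3 eM' !gainB.
  move=> x.
  have [->|nx] := eqVneq x v.
    rewrite (loss_match hm huv) (loss_match hm' M'v).
    have h1 := mf_ge u hv'; have h2 := opt1 v' hv'; have h0 := w_ge0 ut v'.
    have : mf M' ut <= w ut v - w u v + mf M u.
      apply: mf_le; first lra.
      move=> v'' /cov /opt1; lra.
    lra.
  have [->|nx'] := eqVneq x v'.
    rewrite (loss_free hv') (loss_match hm' M'v').
    have : mf M' u <= w u v' by apply: mf_le => // v'' /cov /opt3; lra.
    lra.
  case: (coversRP M x) => [[y hy]|hx].
    by apply: (loss_same hm hm' hy); [apply: M'old | exact: cov].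
  have hx' : ~~ covers M' (inr x).
    apply/coversRP => -[y]; rewrite eB !inE => /orP[/eqP[_ E]|/orP[/eqP[_ E]|/andP[_ hy]]].
    - by rewrite E eqxx in nx'.
    - by rewrite E eqxx in nx.
    - by apply: hx; exists y.
  rewrite (loss_free hx') (loss_free (introN (coversRP M x) hx)); exact: lexx.
Qed.
End Proof.

Theorem lemma4 (n : nat) (R : finType) (w : 'I_n -> R -> rat)
  (w_ge0 : forall u v, 0 <= w u v) (hnR : (n <= #|R|)%N)
  (M : nat -> {set 'I_n * R})
  (M1 : M 1%N = set0)
  (hstep : forall t : nat, (1 <= t <= n)%N -> alg_step w t (M t) (M t.+1)) :
  forall (v : R) (t1 t2 : nat), (1 <= t1)%N -> (t1 <= t2)%N -> (t2 <= n.+1)%N ->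
    loss w (M t1) v <= loss w (M t2) v.
Proof.
move=> v t1 t2 h1 h12 h2.
have hI : forall k, (k <= n)%N -> Inv k.+1 (M k.+1).
  elim=> [_|k IH hk].
    rewrite M1; split; last by move=> e; rewrite in_set0.
    by move=> e e'; rewrite in_set0.
  have hk' : (k < n)%N by [].
  have [hI' _] := step w_ge0 (ut := Ordinal hk') (t := k.+1) erefl erefl (IH (ltnW hk))
    (hstep k.+1 hk').
  exact: hI'.
have mono : forall k, (k < n)%N -> loss w (M k.+1) v <= loss w (M k.+2) v.
  move=> k hk.
  have [_ h] := step w_ge0 (ut := Ordinal hk) (t := k.+1) erefl erefl (hI k (ltnW hk))
    (hstep k.+1 hk).
  exact: h.
case: t1 h1 h12 => // t1 _ h12.
have [d ed] : exists d, t2 = (t1.+1 + d)%N by exists (t2 - t1.+1)%N; lia.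
rewrite ed in h2 *; clear ed h12.
elim: d h2 => [|d IH] h2; first by rewrite addn0.
apply: le_trans (IH _) _; first lia.
rewrite addnS addSn; apply: mono; lia.
Qed.
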